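(* Under the standing assumptions with Gaussian signaling $x\sim\mathcal{CN}(0,1)$, so that $\hat\phi(\rho)=1/(1+\rho)$, and $\mathbf A\neq\mathbf 0$ in the limit (i.e. $\hat\gamma(1)<1$), the equation $\hat\phi(\rho)=\eta^{-1}(\rho)$ has a unique positive solution, namely $$\rho^*_{\rm Gau}=[\hat\gamma(1)]^{-1}-1.$$
   Context: Standing assumptions (LUIS): $M,N\to\infty$ with $\beta=N/M$ fixed; $\mathbf A\in\mathbb C^{M\times N}$ right-unitarily invariant with the empirical eigenvalue distribution of $\mathbf A^{\mathrm H}\mathbf A$ converging to a compactly supported limit, $\frac1N\mathrm{tr}(\mathbf A^{\mathrm H}\mathbf A)\to1$; normalized traces denote large-system limits; $snr>0$. $\hat\phi(\rho)=\mathrm E|x-\mathrm E[x\mid\sqrt\rho x+z]|^2$ with $z\sim\mathcal{CN}(0,1)$ independent of $x$. $\hat\gamma(v)=\frac1N\mathrm{tr}\{(snr\,\mathbf A^{\mathrm H}\mathbf A+v^{-1}\mathbf I)^{-1}\}$ for $v>0$ (strictly increasing, inverse $\hat\gamma^{-1}$); $\eta(v)=v^{-1}-[\hat\gamma^{-1}(v)]^{-1}$, with inverse $\eta^{-1}$. *)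

(* Defs.v *)
From HB Require Import structures.
From mathcomp Require Import all_boot all_order all_algebra.
From mathcomp Require Import all_classical all_reals all_analysis.
Set Implicit Arguments. Unset Strict Implicit. Unset Printing Implicit Defensive.
Import Order.TTheory GRing.Theory Num.Theory.
Local Open Scope classical_set_scope.
Local Open Scope ring_scope.

(* The large-system limit of the empirical eigenvalue distribution of A^H A is
   modelled by a probability measure [mu] on the reals.  Normalized traces
   (1/N) tr f(A^H A) become integrals of f against [mu]. *)

(* gamma_hat(v) = (1/N) tr{(snr A^H A + v^{-1} I)^{-1}} in the limit. *)
Definition gammahat (R : realType) (mu : probability R R) (snr v : R) : R :=
  Rintegral mu setT (fun x : R => (snr * x + v^-1)^-1).

Definition in_range_gammahat (R : realType) (mu : probability R R) (snr v : R) : Prop :=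
  exists u : R, 0 < u /\ gammahat mu snr u = v.

(* gamma_hat^{-1}(v): a (the, since gamma_hat is strictly increasing) u > 0
   with gamma_hat(u) = v. *)
Definition gammahat_inv (R : realType) (mu : probability R R) (snr v : R) : R :=
  xget 1 [set u : R | 0 < u /\ gammahat mu snr u = v].

Definition eta (R : realType) (mu : probability R R) (snr v : R) : R :=
  v^-1 - (gammahat_inv mu snr v)^-1.

(* "v = eta^{-1}(rho)": v is in the domain of eta and eta(v) = rho. *)
Definition is_eta_inv (R : realType) (mu : probability R R) (snr rho v : R) : Prop :=
  in_range_gammahat mu snr v /\ eta mu snr v = rho.

Definition phihat_gau (R : realType) (rho : R) : R := (1 + rho)^-1.

(* Main.v *)
Require Import Defs.
From HB Require Import structures.
From mathcomp Require Import all_boot all_order all_algebra.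
From mathcomp Require Import all_classical all_reals all_analysis.
From mathcomp Require Import measurable_realfun.
From mathcomp Require Import ring lra.
Import Order.TTheory GRing.Theory Num.Theory.
Local Open Scope classical_set_scope.
Local Open Scope ring_scope.

Section aux.
Variables (R : realType).

Lemma measurable_inv : measurable_fun setT (GRing.inv : R -> R).
Proof.
have -> : [set: R] = [set 0] `|` ~` [set 0] by rewrite setUv.
apply/measurable_funU => //; first exact: measurableC.
split; first exact: measurable_fun_set1.
apply: open_continuous_measurable_fun.
  by apply: closed_openC; apply: accessible_closed_set1; apply: hausdorff_accessible; exact: Rhausdorff.
by move=> x /set_mem /eqP x0; apply: inv_continuous.
Qed.

Variables (mu : probability R R) (snr B : R).
Hypothesis snr0 : 0 < snr.
Hypothesis muS : mu `[0, B]%classic = 1%E.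
Let S := `[0, B]%classic : set R.
Let F (v : R) := fun x : R => (snr * x + v^-1)^-1.

Let mS : measurable S. Proof. exact: measurable_itv. Qed.

Let muC : mu (~` S) = 0%E.
Proof.
by rewrite probability_setC // muS subee.
Qed.

Let mF v : measurable_fun setT (F v).
Proof.
have -> : F v = GRing.inv \o (fun x => snr * x + v^-1) by [].
apply: measurableT_comp; first exact: measurable_inv.
apply: measurable_funD => //; exact: measurable_cst.
Qed.

Lemma gh_S v : gammahat mu snr v = \int[mu]_(x in S) F v x.
Proof.
rewrite /gammahat [RHS]Rintegral_mkcond /Rintegral; congr fine.
apply: ae_eq_integral => //.
- exact: (proj2 (measurable_EFinP _ (F v)) (mF v)).
- apply: (proj2 (measurable_EFinP _ _)); apply/(measurable_restrict _ _ _) => //.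
  by rewrite setTI; apply: measurable_funTS.
- exists (~` S); split => //; first exact: measurableC.
  move=> x /= H Sx; apply: H => _.
  by rewrite /patch ifT //; apply/mem_set.
Qed.

Lemma bnd_int (h : R -> R) (M : R) : measurable_fun setT h ->
  (forall x, S x -> `|h x| <= M) -> mu.-integrable S (EFin \o h).
Proof.
move=> mh hM.
apply: (le_integrable mS (g := EFin \o cst M)).
- by apply/measurable_EFinP; apply: measurable_funTS.
- move=> x Sx /=; rewrite lee_fin; apply: (le_trans (hM x Sx)).
  exact: ler_norm.
- exact: finite_measure_integrable_cst.
Qed.


Let Sx_ge0 x : S x -> 0 <= x <= B.
Proof. by rewrite /S /= in_itv. Qed.

Let F_pos (v x : R) : 0 < v -> S x -> 0 < snr * x + v^-1.
Proof.
move=> v0 /Sx_ge0 /andP[x0 _].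
by apply: ltr_wpDl; [exact: mulr_ge0 (ltW snr0) x0 | rewrite invr_gt0].
Qed.

Let F_bnd (v x : R) : 0 < v -> S x -> 0 < F v x <= v.
Proof.
move=> v0 Sx; have d0 := F_pos _ _ v0 Sx.
rewrite /F invr_gt0 d0 /=.
rewrite -[leRHS]invrK lef_pV2 ?posrE ?invr_gt0 //.
rewrite lerDr; apply: mulr_ge0 (ltW snr0) _.
by case/andP: (Sx_ge0 _ Sx).
Qed.

Let intF (v : R) : 0 < v -> mu.-integrable S (EFin \o F v).
Proof.
move=> v0; apply: (bnd_int (F v) v) => // x Sx.
have /andP[a b] := F_bnd _ _ v0 Sx.
by rewrite ger0_norm // ltW.
Qed.

Let mu_S1 : fine (mu S) = 1.
Proof. by rewrite /S muS. Qed.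

Lemma gh_lt (u w : R) : 0 < u -> u < w -> gammahat mu snr u < gammahat mu snr w.
Proof.
move=> u0 uw; have w0 := lt_trans u0 uw.
have i1 := intF w w0; have i2 := intF u u0.
rewrite !gh_S -subr_gt0 -RintegralB //.
set K := (snr * B * w + 1) * (snr * B * u + 1).
have K0 : 0 < K.
  have B0 : 0 <= B.
    rewrite leNgt; apply/negP => B0.
    move: muS; rewrite set_itv_ge ?measure0.
      by case=> /esym/eqP; rewrite oner_eq0.
    by rewrite bnd_simp -ltNge.
  have h1 : 0 <= snr * B * w by rewrite !mulr_ge0 // ltW.
  have h2 : 0 <= snr * B * u by rewrite !mulr_ge0 // ltW.
  by rewrite /K; apply: mulr_gt0; lra.
set c := (w - u) / K.
have c0 : 0 < c by apply: divr_gt0 => //; rewrite subr_gt0.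
apply: (lt_le_trans c0).
have -> : c = \int[mu]_(x in S) c by rewrite Rintegral_cst // mu_S1 mulr1.
apply: le_Rintegral => //.
- exact: finite_measure_integrable_cst.
- apply: (bnd_int (fun x => F w x - F u x) (w + u)).
    apply: measurable_funB => //.
  move=> x Sx; have /andP[a1 b1] := F_bnd _ _ w0 Sx; have /andP[a2 b2] := F_bnd _ _ u0 Sx.
  apply: (le_trans (ler_normB _ _)).
  rewrite (ger0_norm (ltW a1)) (ger0_norm (ltW a2)); lra.
- move=> x Sx.
  have /andP[x0 xB] := Sx_ge0 _ Sx.
  have p1 : 0 <= snr * x * w by rewrite !mulr_ge0 // ltW.
  have p2 : 0 <= snr * x * u by rewrite !mulr_ge0 // ltW.
  have q1 : snr * x * w <= snr * B * w by rewrite ler_pM2r // ler_pM2l.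
  have q2 : snr * x * u <= snr * B * u by rewrite ler_pM2r // ler_pM2l.
  have -> : F w x - F u x = (w - u) / ((snr * x * w + 1) * (snr * x * u + 1)).
    rewrite /F; field.
    by apply/and4P; split; apply: lt0r_neq0; lra.
  rewrite /c ler_pM2l ?subr_gt0 // lef_pV2 ?posrE //; last by apply: mulr_gt0; lra.
  by rewrite /K; apply: ler_pM; lra.
Qed.


Lemma gh_pos : 0 < gammahat mu snr 1.
Proof.
have h : 0 < 2^-1 :> R by rewrite invr_gt0.
have h1 : 2^-1 < 1 :> R by rewrite invf_lt1 // ltr1n.
apply: le_lt_trans (gh_lt _ _ h h1).
rewrite gh_S; apply: Rintegral_ge0 => x Sx.
by have /andP[/ltW] := F_bnd _ _ h Sx.
Qed.

Lemma gh_inj (u : R) : 0 < u -> gammahat mu snr u = gammahat mu snr 1 -> u = 1.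
Proof.
move=> u0 e; case: (ltgtP u 1) => // h.
- by have := gh_lt _ _ u0 h; rewrite e ltxx.
- by have := gh_lt _ _ ltr01 h; rewrite e ltxx.
Qed.

End aux.

Theorem lemma7 (R : realType) (mu : probability R R) (snr : R) :
  0 < snr ->
  (exists B : R, mu `[0, B]%classic = 1%E) ->
  ((\int[mu]_x (x%:E))%E = 1%E) ->
  gammahat mu snr 1 < 1 ->
  let rho_gau := (gammahat mu snr 1)^-1 - 1 in
  [/\ 0 < rho_gau,
      is_eta_inv mu snr rho_gau (phihat_gau rho_gau)
    & forall rho : R, 0 < rho ->
        is_eta_inv mu snr rho (phihat_gau rho) -> rho = rho_gau].
Proof.
move=> snr0 [B muS] _ g1 rho_gau.
set g := gammahat mu snr 1 in g1 rho_gau *.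
have g0 : 0 < g by exact: (@gh_pos R mu snr B snr0 muS).
have ph : phihat_gau rho_gau = g.
  by rewrite /phihat_gau /rho_gau addrC subrK invrK.
have ginv : gammahat_inv mu snr g = 1.
  apply: xget_unique; first by split.
  by move=> y [y0 ey]; apply: (@gh_inj R mu snr B snr0 muS y y0).
split.
- by rewrite /rho_gau subr_gt0 invf_gt1.
- rewrite ph; split; first by exists 1.
  by rewrite /Defs.eta ginv invr1.
- move=> rho rho0 [[u [u0 eu]] ee].
  have := xgetPex 1 (ex_intro _ u (conj u0 eu) : exists u, (fun u => 0 < u /\ gammahat mu snr u = phihat_gau rho) u).
  rewrite -/(gammahat_inv mu snr (phihat_gau rho)).
  move: ee; rewrite /Defs.eta.
  set w := gammahat_inv mu snr (phihat_gau rho).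
  rewrite /phihat_gau invrK => ee [w0 ew].
  have w1 : w^-1 = 1 by move: ee; lra.
  have w1' : w = 1 by rewrite -[w]invrK w1 invr1.
  rewrite /rho_gau; move: ew; rewrite w1' -/g => ->.
  by rewrite invrK addrC addKr.
Qed.
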